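(* Assume $abcd\neq0$. Let $(\omega_M)_{M\ge1}$ be points of $B_{in}$, let $\theta_M\in(0,\pi)$ be defined by $\cos\theta_M=x(\omega_M)$, and put $\theta'_M=\min\{\theta_M,\pi-\theta_M\}$. If $M\theta'_M\to\theta_*$ as $M\to\infty$ with $\theta_*\in(0,\infty)\setminus\pi\mathbb{Z}$, then \[\lim_{M\to\infty}\frac{\mathcal{E}_M(\omega_M)}{M}=\frac{1}{\sin^2\theta_*}\left(1-\frac{\sin2\theta_*}{2\theta_*}\right).\]
   Context: Setting: $C=\begin{bmatrix} a&b\\ c&d\end{bmatrix}$ a fixed $2\times2$ unitary matrix, $\Delta=\det C$, a fixed square root $\Delta^{1/2}$; for each $M\ge1$, $\Gamma_M=\{0,\dots,M-1\}$ and $E_M$ is the linear map on $\ell^2(\Gamma_M;\mathbb{C}^2)$ with $(E_M\varphi)(x)=P\varphi(x+1)+Q\varphi(x-1)$, $\varphi(-1)=\varphi(M)=0$, $P=\begin{bmatrix} a&b\\0&0\end{bmatrix}$, $Q=\begin{bmatrix}0&0\\c&d\end{bmatrix}$. For $\omega$ on the unit circle let $z=\Delta^{1/2}\omega$ and let $\varphi$ be the unique solution of $(z-E_M)\varphi=\delta_0|R\rangle$, $|R\rangle=(0,1)^\top$; the energy is $\mathcal{E}_M(\omega)=\sum_{n=0}^{M-1}\|\varphi(n)\|^2_{\mathbb{C}^2}$. Let $x(\omega)=\frac{\omega+\omega^{-1}}{2|a|}$ and $B_{in}=\{\omega:|\omega|=1,\ |x(\omega)|<1\}$. *)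

(* Defs.v *)
From HB Require Import structures.
From mathcomp Require Import all_boot all_order all_algebra.
From mathcomp Require Import complex.
From mathcomp Require Import all_classical all_reals all_analysis.
Set Implicit Arguments. Unset Strict Implicit. Unset Printing Implicit Defensive.
Import Order.TTheory GRing.Theory Num.Theory.
Local Open Scope ring_scope.

Section QW.
Variable R : realType.
Local Notation C := (complex R).

(* Entries of P = [[a,b],[0,0]] and Q = [[0,0],[c,d]] built from the coin U. *)
Definition Pent (U : 'M[C]_2) (i j : nat) : C :=
  if i == 0%N then U (inord 0) (inord j) else 0.
Definition Qent (U : 'M[C]_2) (i j : nat) : C :=
  if i == 1%N then U (inord 1) (inord j) else 0.

(* ell^2(Gamma_M; C^2) is identified with C^(2M): the coordinate k stands for
   site x = k %/ 2 and spin component i = k %% 2.  E_M as a 2M x 2M matrix: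
   (E_M phi)(x) = P phi(x+1) + Q phi(x-1), with phi(-1) = phi(M) = 0. *)
Definition walk_mx (U : 'M[C]_2) (M : nat) : 'M[C]_(M * 2) :=
  \matrix_(k, l)
    ((if (l %/ 2 == (k %/ 2).+1)%N then Pent U (k %% 2) (l %% 2) else 0) +
     (if ((l %/ 2).+1 == k %/ 2)%N then Qent U (k %% 2) (l %% 2) else 0)).

(* delta_0 |R>, |R> = (0,1)^T : coordinate k = 1 (site 0, component 1). *)
Definition src (M : nat) : 'cV[C]_(M * 2) := \col_k (((k : nat) == 1%N)%:R).

Definition resolvent_sol (U : 'M[C]_2) (M : nat) (z : C) : 'cV[C]_(M * 2) :=
  invmx (z%:M - walk_mx U M) *m src M.

Definition energy (U : 'M[C]_2) (s : C) (M : nat) (w : C) : R :=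
  let phi := resolvent_sol U M (s * w) in
  \sum_k ((complex.Re (phi k 0)) ^+ 2 + (complex.Im (phi k 0)) ^+ 2).

Definition xfun (U : 'M[C]_2) (w : C) : C := (w + w^-1) / (2 * `|U 0 0|).

Definition B_in (U : 'M[C]_2) (w : C) : Prop := `|w| = 1 /\ `|xfun U w| < 1.

Definition unitary2 (U : 'M[C]_2) : Prop :=
  U *m (map_mx (fun z : C => z^*) U)^T = 1%:M.

End QW.

(* Main.v *)
Require Import Defs.
From HB Require Import structures.
From mathcomp Require Import all_boot all_order all_algebra.
From mathcomp Require Import complex.
From mathcomp Require Import all_classical all_reals all_analysis.
From mathcomp Require Import ring lra zify.
Set Implicit Arguments. Unset Strict Implicit. Unset Printing Implicit Defensive.
Import Order.TTheory GRing.Theory Num.Theory.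
Import numFieldNormedType.Exports.
Local Open Scope classical_set_scope.
Local Open Scope ring_scope.

Section PartA.
Variable R : realType.
Local Notation C := (complex R).

Lemma sum_pairs (n : nat) (f : nat -> C) m :
  \sum_(0 <= l < n * 2) (if (l %/ 2 == m)%N then f l else 0) =
  if (m < n)%N then f (2 * m)%N + f (2 * m).+1 else 0.
Proof.
elim: n => [|n IH]; first by rewrite mul0n big_geq.
have -> : (n.+1 * 2 = (n * 2).+2)%N by lia.
rewrite big_nat_recr // big_nat_recr // IH.
have e1 : ((n * 2) %/ 2 = n)%N by lia.
have e2 : ((n * 2).+1 %/ 2 = n)%N by lia.
rewrite e1 e2.
case: (ltngtP m n) => Hmn.
- have -> : (m < n.+1)%N by lia.
  by rewrite /= !addr0.
- have -> : (m < n.+1)%N = false by apply/negbTE; lia.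
  by rewrite /= !addr0.
- subst m; rewrite ltnSn /= add0r; congr (f _ + f _); lia.
Qed.

Lemma sum_pairs2 (V : nmodType) (n : nat) (f : nat -> V) :
  \sum_(0 <= l < n * 2) f l = \sum_(0 <= i < n) (f (2 * i)%N + f (2 * i).+1).
Proof.
elim: n => [|n IH]; first by rewrite mul0n !big_geq.
have -> : (n.+1 * 2 = (n * 2).+2)%N by lia.
rewrite big_nat_recr // big_nat_recr // big_nat_recr // IH /= -addrA; congr (_ + (f _ + f _)); lia.
Qed.

Lemma inord0_2 : (inord 0 : 'I_2) = 0. Proof. by apply/val_inj; rewrite /= inordK. Qed.
Lemma inord1_2 : (inord 1 : 'I_2) = 1. Proof. by apply/val_inj; rewrite /= inordK. Qed.

Variable U : 'M[C]_2.
Variable M : nat.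

Definition gv (psi : 'cV[C]_(M * 2)) (l : nat) : C :=
  oapp (fun i : 'I_(M * 2) => psi i 0) 0 (insub l).

Lemma gvE psi (i : 'I_(M * 2)) : gv psi i = psi i 0.
Proof. by rewrite /gv valK. Qed.

Lemma walk_row (z : C) psi (i : 'I_(M * 2)) :
  ((z%:M - walk_mx U M) *m psi) i 0 =
  z * psi i 0 -
  (if odd i then
     (if (i %/ 2 == 0)%N then 0 else
        U 1 0 * gv psi (2 * (i %/ 2).-1)%N + U 1 1 * gv psi (2 * (i %/ 2).-1).+1)
   else
     (if ((i %/ 2).+1 < M)%N then
        U 0 0 * gv psi (2 * (i %/ 2).+1)%N + U 0 1 * gv psi (2 * (i %/ 2).+1).+1
      else 0)).
Proof.
rewrite mulmxBl mul_scalar_mx !mxE; congr (_ - _).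
under eq_bigr do rewrite mxE mulrDl -gvE.
rewrite big_split /=.
rewrite -(big_mkord xpredT (fun l => (if (l %/ 2 == (i %/ 2).+1)%N then Pent U (i %% 2) (l %% 2) else 0) * gv psi l)).
rewrite -(big_mkord xpredT (fun l => (if ((l %/ 2).+1 == i %/ 2)%N then Qent U (i %% 2) (l %% 2) else 0) * gv psi l)).
under eq_bigr do rewrite (fun_if (fun x => x * _)) mul0r.
rewrite sum_pairs.
have m0 k : ((2 * k) %% 2 = 0)%N by lia.
have m1 k : ((2 * k).+1 %% 2 = 1)%N by lia.
rewrite !m0 !m1 /Pent /Qent !inord0_2 !inord1_2 modn2.
case Hi: (odd i) => /=.
- rewrite !mul0r addr0 if_same add0r.
  have [E|E] := eqVneq (i %/ 2)%N 0%N.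
    rewrite E big1 // => l _; by rewrite mul0r.
  have [j Ej] : exists j, (i %/ 2 = j.+1)%N by exists (i %/ 2).-1; lia.
  rewrite Ej /=.
  rewrite (eq_bigr (fun l => if (l %/ 2 == j)%N then U 1 (inord (l %% 2)) * gv psi l else 0)); last first.
    by move=> l _; rewrite eqSS; case: ifP => _; rewrite ?mul0r.
  rewrite sum_pairs !m0 !m1 /= inord0_2 inord1_2.
  have -> : (j < M)%N.
    have := ltn_ord i. rewrite (divn_eq i 2) modn2 Hi Ej. lia.
  done.
- rewrite big1 ?addr0 // => l _; case: ifP => _; by rewrite ?mul0r.
Qed.

End PartA.

Section PartB.
Variable R : realType.
Local Notation C := (complex R).
Variable U : 'M[C]_2.
Variable M : nat.

Lemma walk_eqs (z r : C) (psi : 'cV[C]_(M * 2)) :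
  (z%:M - walk_mx U M) *m psi = r *: src R M ->
  forall n, (n < M)%N ->
   z * gv psi (2 * n) = (if (n.+1 < M)%N then U 0 0 * gv psi (2 * n.+1) + U 0 1 * gv psi (2 * n.+1).+1 else 0)
 /\ z * gv psi (2 * n).+1 = (if (n == 0)%N then r else U 1 0 * gv psi (2 * n.-1) + U 1 1 * gv psi (2 * n.-1).+1).
Proof.
move=> H n Hn.
have h0 : (2 * n < M * 2)%N by lia.
have h1 : ((2 * n).+1 < M * 2)%N by lia.
have d0 : ((2 * n) %/ 2 = n)%N by lia.
have d1 : ((2 * n).+1 %/ 2 = n)%N by lia.
have o0 : odd (2 * n) = false by rewrite oddM.
have o1 : odd (2 * n).+1 = true by rewrite /= oddM.
split.
- have := congr1 (fun A : 'cV[C]_(M * 2) => A (Ordinal h0) 0) H.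
  rewrite walk_row /= o0 d0 !mxE /=.
  have -> : ((2 * n)%N == 1%N) = false by apply/negbTE; lia.
  rewrite (_ : psi (Ordinal h0) 0 = gv psi (2 * n)); last by rewrite -gvE.
  rewrite mulr0 => /eqP; rewrite subr_eq0 => /eqP ->.
  done.
- have := congr1 (fun A : 'cV[C]_(M * 2) => A (Ordinal h1) 0) H.
  rewrite walk_row /= oddM /= d1 !mxE /=.
  rewrite (_ : psi (Ordinal h1) 0 = gv psi (2 * n).+1); last by rewrite -gvE.
  case: (eqVneq n 0%N) => [->|nz].
    by rewrite /= mulr1 subr0.
  have -> : ((2 * n).+1 == 1)%N = false by apply/negbTE; lia.
  rewrite mulr0 => /eqP; rewrite subr_eq0 => /eqP ->.
  done.
Qed.

End PartB.

Section Backward.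
Variable R : realType.
Local Notation C := (complex R).
Variables (a b c d z : C).

Definition Bstep (w : C * C) : C * C :=
  let u := (a * w.1 + b * w.2) / z in (u, (z * w.2 - c * u) / d).

Definition hseq (k : nat) : C * C := iter k Bstep (0, 1).

Lemma Bstep_scale (l : C) w : Bstep (l * w.1, l * w.2) = (l * (Bstep w).1, l * (Bstep w).2).
Proof. rewrite /Bstep /=; congr pair; rewrite !mulrA; ring. Qed.

Variables (m : nat) (p q : nat -> C) (r : C).
Hypothesis z0 : z != 0.
Hypothesis d0 : d != 0.
Hypothesis E0 : forall n, (n <= m)%N -> z * p n = (if (n < m)%N then a * p n.+1 + b * q n.+1 else 0).
Hypothesis E1 : forall n, (n <= m)%N -> z * q n = (if (n == 0)%N then r else c * p n.-1 + d * q n.-1).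

Lemma backward k : (k <= m)%N -> p (m - k)%N = q m * (hseq k).1 /\ q (m - k)%N = q m * (hseq k).2.
Proof.
elim: k => [_|k IH Hk].
  rewrite subn0 /= mulr1 mulr0; split=> //.
  have := E0 (leqnn m); rewrite ltnn => /eqP; rewrite mulf_eq0 (negbTE z0) /= => /eqP //.
have [IH1 IH2] := IH (ltnW Hk).
have En := E0 (leq_subr k.+1 m).
have Hlt : (m - k.+1 < m)%N by lia.
rewrite Hlt in En.
have e1 : ((m - k.+1).+1 = m - k)%N by lia.
rewrite e1 IH1 IH2 in En.
have Ep : p (m - k.+1)%N = q m * (hseq k.+1).1.
  rewrite /hseq iterS -/(hseq k) /Bstep /=.
  apply: (mulfI z0); rewrite En; field; done.
split=> //.
have Eq := E1 (leq_subr k m).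
have e2 : ((m - k == 0)%N) = false by apply/negbTE; lia.
have e3 : ((m - k).-1 = m - k.+1)%N by lia.
rewrite e2 e3 IH2 Ep in Eq.
rewrite /hseq iterS -/(hseq k) /Bstep /= in Eq *.
apply: (mulfI d0).
have -> : d * q (m - k.+1)%N = z * (q m * (hseq k).2) - c * (q m * ((a * (hseq k).1 + b * (hseq k).2) / z)).
  by rewrite Eq addrAC subrr add0r.
by field; rewrite d0 z0.
Qed.

Lemma backward_end : z * (q m * (hseq m).2) = r.
Proof.
have [_ H] := backward (leqnn m).
rewrite subnn in H; rewrite -H.
have := E1 (leq0n m); done.
Qed.

End Backward.

Section PartC.
Variable R : realType.
Local Notation C := (complex R).

Lemma det2 (A : 'M[C]_2) : \det A = A 0 0 * A 1 1 - A 0 1 * A 1 0.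
Proof.
rewrite (expand_det_row _ 0) !big_ord_recl big_ord0 /cofactor !det_mx11 !mxE /=.
rewrite addr0 /=.
have e1 : lift (0 : 'I_2) (0 : 'I_1) = 1 by apply/val_inj.
have e2 : lift (1 : 'I_2) (0 : 'I_1) = 0 by apply/val_inj.
have e3 : lift (0 : 'I_2) (0 : 'I_1) = 1 by apply/val_inj.
rewrite !e1 /= ?e2 expr0 mul1r /bump /= expr1 mulN1r mulrN.
by [].
Qed.

Definition n2 (x : C) : R := complex.Re x ^+ 2 + complex.Im x ^+ 2.

Lemma mulJ (x : C) : x * x^* = (n2 x)%:C%C.
Proof. case: x => x y; rewrite /n2 /=; apply/eqP; rewrite eq_complex /=; apply/andP; split; apply/eqP; ring. Qed.

Lemma n2M x y : n2 (x * y) = n2 x * n2 y.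
Proof. case: x => x1 x2; case: y => y1 y2; rewrite /n2 /=; ring. Qed.

Lemma n2J x : n2 x^* = n2 x.
Proof. case: x => x1 x2; rewrite /n2 /=; ring. Qed.

Lemma n2_ge0 x : 0 <= n2 x.
Proof. by rewrite /n2 addr_ge0 // sqr_ge0. Qed.

Lemma n2R (r : R) : n2 r%:C%C = r ^+ 2.
Proof. by rewrite /n2 /= expr0n /= addr0. Qed.

Lemma n2_eq0 x : n2 x = 0 -> x = 0.
Proof.
case: x => x1 x2; rewrite /n2 /= => H.
have h1 : x1 ^+ 2 = 0 by apply/eqP; rewrite eq_le sqr_ge0 andbT -H lerDl sqr_ge0.
have h2 : x2 ^+ 2 = 0 by move: H; rewrite h1 add0r.
by move/eqP: h1; move/eqP: h2; rewrite !sqrf_eq0 => /eqP -> /eqP ->.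
Qed.

Lemma n2V x : n2 x^-1 = (n2 x)^-1.
Proof.
have [->|nz] := eqVneq x 0; first by rewrite invr0 /n2 /= expr0n /= addr0 invr0.
apply: (@mulIf _ (n2 x)); first by apply/eqP => /n2_eq0 /eqP; rewrite (negbTE nz).
rewrite -n2M mulVf // mulVf //; last by apply/eqP => /n2_eq0 /eqP; rewrite (negbTE nz).
by rewrite /n2 /= expr0n /= addr0 expr1n.
Qed.

Lemma n2X x k : n2 (x ^+ k) = n2 x ^+ k.
Proof. elim: k => [|k IH]; first by rewrite !expr0 /n2 /= expr0n /= addr0 expr1n. by rewrite !exprS n2M IH. Qed.

Lemma n2N x : n2 (- x) = n2 x.
Proof. case: x => x1 x2; rewrite /n2 /=; ring. Qed.

Lemma n2_1 : n2 1 = 1.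
Proof. by rewrite /n2 /= expr0n /= addr0 expr1n. Qed.

Lemma divRC (x y r : R) : r != 0 -> (x +i* y)%C / r%:C%C = (x / r +i* (y / r))%C.
Proof.
move=> r0; have r0' : (r%:C%C : C) != 0 by rewrite fmorph_eq0.
apply: (@mulIf _ r%:C%C r0'); rewrite mulfVK //.
apply/eqP; rewrite eq_complex /=; apply/andP; split; apply/eqP; field => //.
Qed.

Lemma ReIm_X (x : C) (k r : R) : r != 0 ->
  complex.Re ((x + k%:C%C * x^*) / r%:C%C) = (1 + k) * complex.Re x / r /\
  complex.Im ((x + k%:C%C * x^*) / r%:C%C) = (1 - k) * complex.Im x / r.
Proof.
move=> r0; case: x => x1 x2.
have -> : ((x1 +i* x2)%C + k%:C%C * (x1 +i* x2)%C^* ) = (((1 + k) * x1) +i* ((1 - k) * x2))%C.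
  apply/eqP; rewrite eq_complex /=; apply/andP; split; apply/eqP; ring.
by rewrite divRC.
Qed.

Lemma unit_of_inj (n : nat) (A : 'M[C]_n) :
  (forall psi : 'cV[C]_n, A *m psi = 0 -> psi = 0) -> A \in unitmx.
Proof.
move=> H; rewrite -unitmx_tr -row_free_unit -kermx_eq0; apply/eqP.
have HK := mulmx_ker A^T.
apply/matrixP => i j; rewrite mxE.
have h : A *m (row i (kermx A^T))^T = 0.
  by rewrite -[A]trmxK -trmx_mul trmxK -row_mul HK row0 trmx0.
have := congr1 (fun B : 'cV[C]_n => B j 0) (H _ h).
by rewrite !mxE.
Qed.

End PartC.

Section Setup.
Variable R : realType.
Local Notation C := (complex R).
Variables (U : 'M[C]_2) (s w : C) (th : R).
Hypothesis HU : unitary2 U.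
Hypothesis Hs : s ^+ 2 = \det U.
Hypothesis Habcd : U 0 0 * U 0 1 * U 1 0 * U 1 1 != 0.
Hypothesis Hw : `|w| = 1.
Hypothesis Hth : 0 < th < pi.
Hypothesis Hx : (cos th)%:C%C = xfun U w.

Local Notation a := (U 0 0).
Local Notation b := (U 0 1).
Local Notation c := (U 1 0).
Local Notation d := (U 1 1).
Local Notation Dl := (\det U).

Lemma a0 : a != 0. Proof. by move: Habcd; rewrite !mulf_eq0 !negb_or => /andP[/andP[/andP[]]]. Qed.
Lemma b0 : b != 0. Proof. by move: Habcd; rewrite !mulf_eq0 !negb_or => /andP[/andP[/andP[]]]. Qed.
Lemma c0 : c != 0. Proof. by move: Habcd; rewrite !mulf_eq0 !negb_or => /andP[/andP[/andP[]]]. Qed.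
Lemma d0 : d != 0. Proof. by move: Habcd; rewrite !mulf_eq0 !negb_or => /andP[/andP[/andP[]]]. Qed.

Lemma uent (i j : 'I_2) : U i 0 * (U j 0)^* + U i 1 * (U j 1)^* = (i == j)%:R.
Proof.
have := congr1 (fun A : 'M[C]_2 => A i j) HU.
rewrite !mxE !big_ord_recl big_ord0 addr0 !mxE.
have l : lift ord0 ord0 = (1 : 'I_2) by apply/val_inj.
by rewrite l.
Qed.

Lemma u1 : a * a^* + b * b^* = 1. Proof. by have := uent 0 0. Qed.
Lemma u2 : c * a^* + d * b^* = 0. Proof. by have := uent 1 0. Qed.
Lemma u3 : c * c^* + d * d^* = 1. Proof. by have := uent 1 1. Qed.

Lemma dE : d = Dl * a^*.
Proof.
rewrite det2; apply/eqP; rewrite -subr_eq0; apply/eqP.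
have -> : d - (a * d - b * c) * a^* = - d * (a * a^* + b * b^* - 1) + b * (c * a^* + d * b^*) by ring.
by rewrite u1 u2 subrr; ring.
Qed.

Lemma cE : c = - Dl * b^*.
Proof.
rewrite det2; apply/eqP; rewrite -subr_eq0; apply/eqP.
have -> : c - - (a * d - b * c) * b^* = a * (c * a^* + d * b^*) - c * (a * a^* + b * b^* - 1) by ring.
by rewrite u1 u2 subrr; ring.
Qed.

Definition al := n2 a.
Definition be := n2 b.

Lemma albe : al + be = 1.
Proof. apply: (@complexI R); rewrite rmorphD /= -!mulJ u1 //. Qed.

Lemma n2Dl : n2 Dl = 1.
Proof.
have h : n2 c + n2 d = 1 by apply: (@complexI R); rewrite rmorphD /= -!mulJ u3.
move: h; rewrite {1}cE {1}dE !n2M n2N !n2J -mulrDr -/al -/be addrC albe mulr1 //.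
Qed.


Lemma n2s : n2 s = 1.
Proof.
have : n2 s ^+ 2 = 1 by rewrite -n2X Hs n2Dl.
move/eqP; rewrite sqrf_eq1 => /orP[/eqP //|/eqP h].
by have := n2_ge0 s; rewrite h; lra.
Qed.

Lemma n2w : n2 w = 1.
Proof.
have := Hw; rewrite normc_def -/(n2 w) => /complexI h.
by rewrite -(@sqr_sqrtr _ (n2 w)) ?n2_ge0 // h expr1n.
Qed.

Lemma al_gt0 : 0 < al.
Proof.
rewrite lt_def n2_ge0 andbT; apply/eqP => /n2_eq0 h.
by move: a0; rewrite h eqxx.
Qed.

Definition ra := Num.sqrt al.
Lemma ra_gt0 : 0 < ra. Proof. by rewrite sqrtr_gt0 al_gt0. Qed.
Lemma ra2 : ra ^+ 2 = al. Proof. by rewrite sqr_sqrtr // ltW // al_gt0. Qed.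
Lemma normaE : `|a| = ra%:C%C. Proof. by rewrite normc_def. Qed.

Lemma w0 : w != 0.
Proof. by apply/eqP => h; have := n2w; rewrite h /n2 /= expr0n /= addr0 => /eqP; rewrite eq_sym oner_eq0. Qed.

Lemma wV : w^-1 = w^*.
Proof. by apply: (@mulfI _ w w0); rewrite mulfV ?w0 // mulJ n2w. Qed.

Lemma cosE : cos th = complex.Re w / ra.
Proof.
apply: (@complexI R); rewrite Hx /xfun normaE wV addcJ.
have r0 : ra != 0 by rewrite gt_eqF // ra_gt0.
rewrite rmorphM rmorphV ?unitfE //=.
have r0' : (ra%:C%C : C) != 0 by rewrite fmorph_eq0.
have t0 : (2 : C) != 0 by rewrite pnatr_eq0.
by field; rewrite fmorph_eq0.
Qed.


Lemma s0 : s != 0.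
Proof. by apply/eqP => h; have := n2s; rewrite h /n2 /= expr0n /= addr0 => /eqP; rewrite eq_sym oner_eq0. Qed.

Definition z := s * w.
Lemma z0 : z != 0. Proof. by rewrite mulf_neq0 ?s0 ?w0. Qed.
Lemma n2z : n2 z = 1. Proof. by rewrite n2M n2s n2w mulr1. Qed.

Definition tr := (Dl + z ^+ 2) / (z * d).
Definition Dt := a / d.
Definition Bs := Bstep a b c d z.

Lemma CH v : Bs (Bs v) = (tr * (Bs v).1 - Dt * v.1, tr * (Bs v).2 - Dt * v.2).
Proof.
have zn := z0; have dn := d0.
rewrite /Bs /Bstep /tr /Dt det2 /=; congr pair; field; by rewrite ?zn ?dn.
Qed.

Lemma rC0 : (ra%:C%C : C) != 0. Proof. by rewrite fmorph_eq0 gt_eqF // ra_gt0. Qed.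

Definition mu := d / (s * ra%:C%C).

Lemma mutr : mu * tr = 2 * (cos th)%:C%C.
Proof.
have zn := z0; have dn := d0; have sn := s0; have wn := w0; have rn := rC0.
rewrite Hx /xfun normaE /mu /tr /z -Hs.
by field; rewrite ?zn ?dn ?sn ?wn ?rn ?pnatr_eq0.
Qed.

Lemma muDt : mu ^+ 2 * Dt = 1.
Proof.
have dn := d0; have sn := s0; have rn := rC0.
have h : d * a = Dl * (ra%:C%C) ^+ 2.
  by rewrite {1}dE -mulrA (mulrC _ a) mulJ -rmorphXn ra2.
have -> : mu ^+ 2 * Dt = d * a / (s ^+ 2 * (ra%:C%C) ^+ 2).
  by rewrite /mu /Dt; field; rewrite ?dn ?sn ?rn.
rewrite h Hs; field; apply/andP; split; first by rewrite fmorph_eq0 gt_eqF // ra_gt0.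
by apply/eqP => h0; have := n2Dl; rewrite h0 /n2 /= expr0n /= addr0 => /eqP; rewrite eq_sym oner_eq0.
Qed.

Lemma n2mu : n2 mu = 1.
Proof.
rewrite /mu n2M n2V n2M n2s n2R ra2 mul1r dE n2M n2Dl n2J mul1r -/al mulfV //.
by rewrite gt_eqF // al_gt0.
Qed.

Definition X1 := mu * (Bs (0, 1)).1.
Definition X2 := mu * (Bs (0, 1)).2.

Lemma n2X1 : n2 X1 = be.
Proof. by rewrite /X1 /Bs /Bstep /= n2M n2mu mul1r mulr0 add0r mulr1 n2M n2V n2z invr1 mulr1. Qed.

Lemma X2E : X2 = (w + be%:C%C * w^*) / ra%:C%C.
Proof.
have zn := z0; have dn := d0; have sn := s0; have wn := w0; have rn := rC0.
rewrite /X2 /Bs /Bstep /= mulr0 add0r !mulr1.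
have -> : c * (b / z) = - s ^+ 2 * be%:C%C / z.
  by rewrite cE -Hs /be -mulJ; field.
rewrite /mu /z -wV; field; by rewrite ?dn ?sn ?wn ?rn.
Qed.

Lemma X2Re : complex.Re X2 = (1 + be) * cos th.
Proof. by rewrite X2E (ReIm_X _ _ (lt0r_neq0 ra_gt0)).1 cosE mulrA. Qed.

Lemma X2Im : complex.Im X2 = ra * complex.Im w.
Proof.
rewrite X2E (ReIm_X _ _ (lt0r_neq0 ra_gt0)).2.
have -> : 1 - be = ra ^+ 2 by rewrite ra2 -albe addrK.
have rn : ra != 0 by rewrite gt_eqF // ra_gt0.
by field.
Qed.


Definition sn := sin th.
Definition cs := cos th.
Definition Sr (x : R) := sin (x * th).

Lemma sn_gt0 : 0 < sn. Proof. exact: sin_gt0_pi. Qed.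
Lemma sn0 : sn != 0. Proof. by rewrite gt_eqF // sn_gt0. Qed.

Lemma Srrec x : Sr (x + 2) = 2 * cs * Sr (x + 1) - Sr x.
Proof.
rewrite /Sr /cs.
have -> : (x + 2) * th = (x + 1) * th + th by ring.
have -> : x * th = (x + 1) * th - th by ring.
rewrite sinD sinB; ring.
Qed.

Lemma Sr0 : Sr 0 = 0. Proof. by rewrite /Sr mul0r sin0. Qed.
Lemma Sr1 : Sr 1 = sn. Proof. by rewrite /Sr mul1r. Qed.
Lemma SrN1 : Sr (-1) = - sn. Proof. by rewrite /Sr mulN1r sinN. Qed.

Definition hs := hseq a b c d z.

Definition Zs (k : nat) : C * C :=
  ((Sr k%:R / sn)%:C%C * X1, (Sr k%:R / sn)%:C%C * X2 - (Sr (k%:R - 1) / sn)%:C%C).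

Lemma hs_closed k : mu ^+ k * (hs k).1 = (Zs k).1 /\ mu ^+ k * (hs k).2 = (Zs k).2.
Proof.
move: k; suff H : forall k, (mu ^+ k * (hs k).1 = (Zs k).1 /\ mu ^+ k * (hs k).2 = (Zs k).2) /\
   (mu ^+ k.+1 * (hs k.+1).1 = (Zs k.+1).1 /\ mu ^+ k.+1 * (hs k.+1).2 = (Zs k.+1).2).
  by move=> k; case: (H k).
have sn1 : (sn / sn) = 1 by rewrite mulfV // sn0.
elim=> [|k [[IH1 IH2] [IH3 IH4]]].
  rewrite /Zs /= !expr1 !expr0 !mul1r.
  rewrite ?(Sr0, SrN1, Sr1, sub0r, subrr, mul0r, mulNr, sn1, rmorph0, rmorphN, rmorph1, opprK, mul1r, subr0).
  rewrite -[mu * ((a * 0 + b * 1) / z)]/X1 -[mu * ((z * 1 - c * ((a * 0 + b * 1) / z)) / d)]/X2.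
  by [].
split; first by [].
have e : hs k.+2 = Bs (Bs (hs k)) by [].
rewrite e CH /= -/(hs k.+1).
have key (A1 A0 : C) : mu ^+ k.+2 * (tr * A1 - Dt * A0) = (mu * tr) * (mu ^+ k.+1 * A1) - (mu ^+ 2 * Dt) * (mu ^+ k * A0).
  by rewrite !exprS; ring.
rewrite !key mutr muDt !mul1r IH1 IH2 IH3 IH4 /Zs /=.
have n2 : (k.+2)%:R = (k%:R + 2 : R) by rewrite -addn2 natrD.
have n1 : (k.+1)%:R = (k%:R + 1 : R) by rewrite -addn1 natrD.
have r1 : Sr (k.+2)%:R / sn = 2 * cs * (Sr (k.+1)%:R / sn) - Sr k%:R / sn.
  by rewrite n2 n1 Srrec; field; rewrite sn0.
have r2 : Sr ((k.+2)%:R - 1) / sn = 2 * cs * (Sr ((k.+1)%:R - 1) / sn) - Sr (k%:R - 1) / sn.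
  have -> : (k.+2)%:R - 1 = (k%:R - 1) + 2 :> R by rewrite n2; ring.
  have -> : (k.+1)%:R - 1 = (k%:R - 1) + 1 :> R by rewrite n1; ring.
  by rewrite Srrec; field; rewrite sn0.
rewrite r1 r2 !rmorphB !rmorphM /= -/cs.
split; ring.
Qed.


Lemma Qx x : Sr x ^+ 2 + Sr (x - 1) ^+ 2 - 2 * cs * Sr x * Sr (x - 1) = sn ^+ 2.
Proof.
rewrite /Sr /cs /sn.
have -> : (x - 1) * th = x * th - th by ring.
rewrite sinB.
have h1 := cos2Dsin2 (x * th); have h2 := cos2Dsin2 th.
apply/eqP; rewrite -subr_eq0; apply/eqP.
set sA := sin (x * th); set cA := cos (x * th); set st := sin th; set ct := cos th.
have -> : sA ^+ 2 + (sA * ct - cA * st) ^+ 2 - 2 * ct * sA * (sA * ct - cA * st) - st ^+ 2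
   = - sA ^+ 2 * (ct ^+ 2 + st ^+ 2 - 1) + st ^+ 2 * (cA ^+ 2 + sA ^+ 2 - 1) by ring.
by rewrite h1 h2 subrr !mulr0 addr0.
Qed.

Lemma n2_lin (y1 y0 : R) (x : C) :
  n2 ((y1%:C%C) * x - y0%:C%C) = (y1 * complex.Re x - y0) ^+ 2 + (y1 * complex.Im x) ^+ 2.
Proof. case: x => x1 x2; rewrite /n2 /=; ring. Qed.

Lemma Imw2 : complex.Im w ^+ 2 = 1 - al * cs ^+ 2.
Proof.
have := n2w; rewrite /n2 => h.
have hr : complex.Re w = ra * cs.
  rewrite /cs cosE; field; by rewrite gt_eqF // ra_gt0.
rewrite hr exprMn ra2 in h; rewrite -h; ring.
Qed.

Lemma n2hs_i k (i : bool) : n2 (if i then (hs k).1 else (hs k).2) = n2 (if i then (Zs k).1 else (Zs k).2).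
Proof.
have [h1 h2] := hs_closed k.
by case: i; rewrite -?h1 -?h2 n2M n2X n2mu expr1n mul1r.
Qed.

Lemma hs_v k : n2 (hs k).2 = (al * sn ^+ 2 + be * Sr (k.+1)%:R ^+ 2) / sn ^+ 2.
Proof.
have := n2hs_i k false; rewrite /= => ->.
rewrite /Zs /= n2_lin X2Re X2Im.
have n1 : (k.+1)%:R = ((k%:R - 1) + 2 : R) by rewrite -addn1 natrD; ring.
have n0 : (k%:R : R) = (k%:R - 1) + 1 by ring.
rewrite n1 Srrec -n0.
have Q := Qx k%:R.
have hbe : be = 1 - al by rewrite -albe; ring.
rewrite -/cs.
have hI : (Sr k%:R / sn * (ra * complex.Im w)) ^+ 2 = (Sr k%:R / sn) ^+ 2 * (ra ^+ 2 * (1 - al * cs ^+ 2)).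
  by rewrite !exprMn Imw2.
rewrite hI hbe.
apply/eqP; rewrite -subr_eq0; apply/eqP.
have sn2 : sn ^+ 2 != 0 by rewrite expf_neq0 // sn0.
set s1 := Sr k%:R; set s0 := Sr (k%:R - 1).
have -> : (s1 / sn * ((1 + (1 - al)) * cs) - s0 / sn) ^+ 2 + (s1 / sn) ^+ 2 * (ra ^+ 2 * (1 - al * cs ^+ 2)) -
   (al * sn ^+ 2 + (1 - al) * (2 * cs * s1 - s0) ^+ 2) / sn ^+ 2 =
   al * (s1 ^+ 2 + s0 ^+ 2 - 2 * cs * s1 * s0 - sn ^+ 2) / sn ^+ 2.
  rewrite ra2; field; by rewrite sn0.
by rewrite Q subrr mulr0 mul0r.
Qed.

Lemma hs_tot k : n2 (hs k).1 + n2 (hs k).2 = 1 + 2 * be * cs * Sr k%:R * Sr (k.+1)%:R / sn ^+ 2.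
Proof.
rewrite hs_v.
have := n2hs_i k true; rewrite /= => ->.
rewrite /Zs /= n2M n2R n2X1.
have Q := Qx (k.+1)%:R.
have n0 : ((k.+1)%:R - 1 : R) = k%:R by rewrite -addn1 natrD; ring.
rewrite n0 in Q.
have hal : al = 1 - be by rewrite -albe; ring.
rewrite hal.
apply/eqP; rewrite -subr_eq0; apply/eqP.
set s1 := Sr k%:R; set s2 := Sr (k.+1)%:R.
have -> : (s1 / sn) ^+ 2 * be + ((1 - be) * sn ^+ 2 + be * s2 ^+ 2) / sn ^+ 2 -
  (1 + 2 * be * cs * s1 * s2 / sn ^+ 2) = be * (s2 ^+ 2 + s1 ^+ 2 - 2 * cs * s2 * s1 - sn ^+ 2) / sn ^+ 2.
  field; by rewrite sn0.
by rewrite Q subrr mulr0 mul0r.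
Qed.


Lemma sumSS (M : nat) : 4 * sn * \sum_(0 <= k < M) (Sr k%:R * Sr (k.+1)%:R) = 2 * M%:R * cs * sn - Sr (2 * M)%:R.
Proof.
elim: M => [|M IH]; first by rewrite big_geq // mulr0 muln0 Sr0 mulr0 !mul0r subr0.
rewrite big_nat_recr //= mulrDr IH.
rewrite /Sr /cs /sn.
have e1 : (M.+1)%:R * th = M%:R * th + th by rewrite -addn1 natrD; ring.
have e2 : (2 * M)%:R * th = M%:R * th + M%:R * th by rewrite natrM; ring.
have e3 : (2 * M.+1)%:R * th = (M%:R * th + M%:R * th) + (th + th) by rewrite natrM -addn1 natrD; ring.
have e4 : (M.+1)%:R = (M%:R + 1 : R) by rewrite -addn1 natrD.
rewrite e1 e2 e3 e4 !sinD !cosD.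
have h1 := cos2Dsin2 (M%:R * th); have h2 := cos2Dsin2 th.
set X := sin (M%:R * th); set Y := cos (M%:R * th); set st := sin th; set ct := cos th.
apply/eqP; rewrite -subr_eq0; apply/eqP.
set LHS := (X in X = 0).
have -> : LHS = 2 * ct * st * (Y ^+ 2 + X ^+ 2 - 1) + 2 * X * Y * (ct ^+ 2 + st ^+ 2 - 1) by rewrite /LHS; ring.
by rewrite h1 h2 subrr !mulr0 addr0.
Qed.

Lemma Dpos M : 0 < al * sn ^+ 2 + be * Sr M ^+ 2.
Proof.
apply: ltr_pwDl; last by rewrite mulr_ge0 ?n2_ge0 ?sqr_ge0.
by rewrite mulr_gt0 ?al_gt0 // exprn_gt0 // sn_gt0.
Qed.

Lemma hs_v_gt0 k : 0 < n2 (hs k).2.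
Proof. by rewrite hs_v divr_gt0 ?Dpos // exprn_gt0 // sn_gt0. Qed.


Section En.
Variable m : nat.
Local Notation M := m.+1.

Lemma eqs_of (psi : 'cV[C]_(M * 2)) (r : C) :
  (z%:M - walk_mx U M) *m psi = r *: src R M ->
  (forall n, (n <= m)%N -> z * gv psi (2 * n) =
     (if (n < m)%N then a * gv psi (2 * n.+1) + b * gv psi (2 * n.+1).+1 else 0)) /\
  (forall n, (n <= m)%N -> z * gv psi (2 * n).+1 =
     (if (n == 0)%N then r else c * gv psi (2 * n.-1) + d * gv psi (2 * n.-1).+1)).
Proof.
move=> H; split=> n Hn.
- by have [-> _] := walk_eqs H (n := n) Hn.
- by have [_ ->] := walk_eqs H (n := n) Hn.
Qed.

Lemma gv_split (psi : 'cV[C]_(M * 2)) (i : 'I_(M * 2)) :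
  psi i 0 = if odd i then gv psi (2 * (i %/ 2)).+1 else gv psi (2 * (i %/ 2)).
Proof.
rewrite -gvE; have := divn_eq i 2; rewrite modn2; case: (odd i) => /= e; congr gv; lia.
Qed.

Lemma Aunit : (z%:M - walk_mx U M) \in unitmx.
Proof.
apply: unit_of_inj => psi H.
have H0 : (z%:M - walk_mx U M) *m psi = 0 *: src R M by rewrite scale0r.
have [E0 E1] := eqs_of H0.
have Hend := backward_end z0 d0 E0 E1.
have qm0 : gv psi (2 * m).+1 = 0.
  move/(congr1 (@n2 R)): Hend; rewrite !n2M ?n2z ?n2s ?n2w !mul1r.
  have := hs_v_gt0 m; rewrite -/(hs m) /n2 /= expr0n /= addr0 => hp /eqP.
  rewrite mulf_eq0 (gt_eqF hp) orbF => /eqP /n2_eq0; done.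
apply/matrixP => i j; rewrite (ord1 j) mxE gv_split.
have Hi : (i %/ 2 <= m)%N by have := ltn_ord i; lia.
have [B1 B2] := backward z0 d0 E0 E1 (leq_subr (i %/ 2) m).
have e : (m - (m - i %/ 2) = i %/ 2)%N by lia.
rewrite e qm0 !mul0r in B1 B2.
by case: (odd i).
Qed.

Definition phi := resolvent_sol U M z.

Lemma phi_eq : (z%:M - walk_mx U M) *m phi = 1 *: src R M.
Proof. by rewrite scale1r /phi /resolvent_sol mulKVmx // Aunit. Qed.

Lemma energyE : energy U s M w =
  (sn ^+ 2 * M%:R + be * cs * (2 * M%:R * cs * sn - Sr (2 * M)%:R) / (2 * sn)) /
  (al * sn ^+ 2 + be * Sr M%:R ^+ 2).
Proof.
have [E0 E1] := eqs_of phi_eq.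
have Hend := backward_end z0 d0 E0 E1.
have Hq : n2 (gv phi (2 * m).+1) = sn ^+ 2 / (al * sn ^+ 2 + be * Sr M%:R ^+ 2).
  move/(congr1 (@n2 R)): Hend; rewrite !n2M ?n2z ?n2s ?n2w !mul1r n2_1 -/(hs m) hs_v => h.
  have Dn := Dpos M%:R.
  apply: (@mulIf _ ((al * sn ^+ 2 + be * Sr M%:R ^+ 2) / sn ^+ 2)).
    by rewrite mulf_neq0 ?invr_eq0 ?expf_neq0 ?sn0 ?gt_eqF.
  by rewrite h; field; rewrite ?sn0 ?gt_eqF.
rewrite /energy /=.
rewrite (_ : \sum_k _ = \sum_(0 <= l < M * 2) n2 (gv phi l)); last first.
  rewrite big_mkord; apply: eq_bigr => i _; by rewrite gvE.
rewrite sum_pairs2.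
rewrite (eq_big_nat _ _ (F2 := fun i => n2 (gv phi (2 * m).+1) * (n2 (hs (m - i)%N).1 + n2 (hs (m - i)%N).2))); last first.
  move=> i /andP[_ Hi].
  have [B1 B2] := backward z0 d0 E0 E1 (leq_subr i m).
  have e : (m - (m - i) = i)%N by lia.
  by rewrite e in B1 B2; rewrite B1 B2 !n2M -mulrDr.
rewrite big_nat_rev /=.
rewrite (eq_big_nat _ _ (F2 := fun i => n2 (gv phi (2 * m).+1) * (1 + 2 * be * cs / sn ^+ 2 * (Sr i%:R * Sr (i.+1)%:R)))); last first.
  move=> i /andP[_ Hi].
  have e : (m - (0 + M - i.+1) = i)%N by lia.
  by rewrite e hs_tot; congr (_ * (1 + _)); ring.
rewrite -mulr_sumr big_split /= -mulr_sumr sumr_const_nat subn0.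
have HS := sumSS M.
have hsum : \sum_(0 <= i < M) (Sr i%:R * Sr (i.+1)%:R) = (2 * M%:R * cs * sn - Sr (2 * M)%:R) / (4 * sn).
  by rewrite -HS; field; rewrite sn0.
rewrite hsum Hq.
have Dn := Dpos M%:R.
rewrite -[1 *+ M]/(M%:R).
field; by rewrite ?sn0 ?gt_eqF.
Qed.

End En.

End Setup.

Section Lim.
Variable R : realType.

Definition Gf (al be t : R) (M : nat) : R :=
  (sin t ^+ 2 + be * cos t ^+ 2 - be * (cos t * sin ((2 * M)%:R * t)) / (2 * (M%:R * sin t))) /
  (al * sin t ^+ 2 + be * sin (M%:R * t) ^+ 2).

Lemma sin_natpi (k : nat) : sin (k%:R * pi) = 0 :> R.
Proof. by rewrite mulr_natl -[pi *+ k]add0r (alternatingn (@sinDpi R)) sin0 mulr0. Qed.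

Lemma cos_natpi (k : nat) : cos (k%:R * pi) = (-1) ^+ k :> R.
Proof. by rewrite mulr_natl -[pi *+ k]add0r (alternatingn (@cosDpi R)) cos0 mulr1. Qed.

Lemma sin_refl (k : nat) (th : R) : sin (k%:R * (pi - th)) = - (-1) ^+ k * sin (k%:R * th).
Proof. by rewrite mulrBr sinB sin_natpi cos_natpi mul0r sub0r mulNr. Qed.

Lemma Gf_refl al be th M : Gf al be (pi - th) M = Gf al be th M.
Proof.
rewrite /Gf.
have h1 : sin (pi - th) = sin th by rewrite sinB sinpi cospi mul0r sub0r mulN1r opprK.
have h2 : cos (pi - th) = - cos th by rewrite cosB sinpi cospi mul0r addr0 mulN1r.
have h3 : sin (M%:R * (pi - th)) ^+ 2 = sin (M%:R * th) ^+ 2.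
  by rewrite sin_refl exprMn sqrrN -exprM mulnC exprM sqrrN !expr1n mul1r.
have h4 : cos (pi - th) * sin ((2 * M)%:R * (pi - th)) = cos th * sin ((2 * M)%:R * th).
  by rewrite h2 sin_refl exprM sqrrN expr1n expr1n mulN1r mulrN mulNr opprK.
by rewrite h1 h3 h4 h2 sqrrN.
Qed.

Implicit Types (f g : nat -> R) (a b : R).
Lemma LD f g a b : f @ \oo --> a -> g @ \oo --> b -> (fun n => f n + g n) @ \oo --> a + b.
Proof. move=> hf hg; exact: cvgD. Qed.
Lemma LB f g a b : f @ \oo --> a -> g @ \oo --> b -> (fun n => f n - g n) @ \oo --> a - b.
Proof. move=> hf hg; exact: cvgB. Qed.
Lemma LM f g a b : f @ \oo --> a -> g @ \oo --> b -> (fun n => f n * g n) @ \oo --> a * b.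
Proof. move=> hf hg; exact: cvgM. Qed.
Lemma LV f a : a != 0 -> f @ \oo --> a -> (fun n => (f n)^-1) @ \oo --> a^-1.
Proof. move=> ha hf; exact: cvgV. Qed.
Lemma LC a : (fun n : nat => a) @ \oo --> a.
Proof. exact: cvg_cst. Qed.
Lemma LS f a : f @ \oo --> a -> (fun n => sin (f n)) @ \oo --> sin a.
Proof. move=> hf; exact: (continuous_cvg _ (@continuous_sin R a) hf). Qed.
Lemma LCo f a : f @ \oo --> a -> (fun n => cos (f n)) @ \oo --> cos a.
Proof. move=> hf; exact: (continuous_cvg _ (@continuous_cos R a) hf). Qed.
Lemma LX f a k : f @ \oo --> a -> (fun n => f n ^+ k) @ \oo --> a ^+ k.
Proof. move=> hf; elim: k => [|k IH]; first by under eq_fun do rewrite expr0; rewrite expr0; exact: LC.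
under eq_fun do rewrite exprS. rewrite exprS. exact: LM. Qed.
Lemma Leq f g a : g @ \oo --> a -> (forall n, (0 < n)%N -> f n = g n) -> f @ \oo --> a.
Proof.
move=> hg H; apply: cvg_trans hg; apply: near_eq_cvg.
exists 1%N => // M /= hM; rewrite H //.
Qed.
Lemma sinc : sin h / h @[h --> (0:R)^'] --> (1:R).
Proof.
have d := @ex_derive _ _ _ _ _ _ _ (is_derive_sin (0 : R)).
have v := @derive_val _ _ _ _ _ _ _ (is_derive_sin (0 : R)).
rewrite /derivable in d.
move: d. rewrite /derive in v. rewrite v cos0.
have e : (fun h : R => h^-1 *: ((sin \o shift 0) h%:A - sin 0)) = (fun h => sin h / h).
  by apply/funext => h; rewrite /= sin0 subr0 addr0 /GRing.scale /= mulr1 mulrC.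
by rewrite e.
Qed.

Lemma hinv : (M%:R : R)^-1 @[M --> \oo] --> 0.
Proof. rewrite -cvg_shiftS; exact: (@cvg_harmonic R). Qed.

Lemma Glim (al be ts : R) (t : nat -> R) :
  0 < be -> 0 < ts -> sin ts != 0 -> (forall M, 0 < t M) ->
  (fun M => M%:R * t M) @ \oo --> ts ->
  (fun M => Gf al be (t M) M) @ \oo --> (sin ts ^+ 2)^-1 * (1 - sin (2 * ts) / (2 * ts)).
Proof.
move=> be0 ts0 sts tpos Hy.
set y := fun M => M%:R * t M.
have ht : t @ \oo --> 0.
  apply: (@Leq _ (fun M => y M * (M%:R)^-1)); first by rewrite -(mulr0 ts); exact: LM Hy hinv.
  move=> n hn; rewrite /y mulrAC mulfV ?mul1r // pnatr_eq0; lia.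
have hst : (fun M => sin (t M)) @ \oo --> (0:R) by rewrite -sin0; exact: LS.
have hct : (fun M => cos (t M)) @ \oo --> (1:R) by rewrite -cos0; exact: LCo.
have hsy : (fun M => sin (y M)) @ \oo --> sin ts by exact: LS.
have hs2y : (fun M => sin (2 * y M)) @ \oo --> sin (2 * ts) by apply: LS; apply: LM => //; exact: LC.
have hsinc : (fun M => sin (t M) / t M) @ \oo --> (1:R).
  have := (cvgr_dnbhsP (fun h : R => sin h / h) 0 1).1 sinc t.
  apply; split => // n; exact: lt0r_neq0.
have hMs : (fun M => M%:R * sin (t M)) @ \oo --> ts.
  apply: (@Leq _ (fun M => y M * (sin (t M) / t M))); first by rewrite -(mulr1 ts); exact: LM.
  move=> n _; rewrite /y; field; exact: lt0r_neq0.
have e2 : forall M, (2 * M)%:R * t M = 2 * y M by move=> M; rewrite /y natrM mulrA.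
have hN : (fun M => sin (t M) ^+ 2 + be * cos (t M) ^+ 2 - be * (cos (t M) * sin ((2 * M)%:R * t M)) / (2 * (M%:R * sin (t M))))
   @ \oo --> 0 ^+ 2 + be * 1 ^+ 2 - be * (1 * sin (2 * ts)) / (2 * ts).
  under eq_fun do rewrite e2.
  apply: LB; first (apply: LD; [exact: LX | apply: LM; [exact: LC | exact: LX]]).
  apply: LM; first (apply: LM; [exact: LC | exact: LM]).
  apply: LV; first by rewrite mulf_neq0 // ?pnatr_eq0 // gt_eqF.
  apply: LM => //; exact: LC.
have hD : (fun M => al * sin (t M) ^+ 2 + be * sin (M%:R * t M) ^+ 2) @ \oo --> al * 0 ^+ 2 + be * sin ts ^+ 2.
  apply: LD; apply: LM; try exact: LC; exact: LX.
have hD0 : al * 0 ^+ 2 + be * sin ts ^+ 2 != 0.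
  by rewrite expr0n /= mulr0 add0r mulf_neq0 ?expf_neq0 // gt_eqF.
have := LM hN (LV hD0 hD).
have -> : (0 ^+ 2 + be * 1 ^+ 2 - be * (1 * sin (2 * ts)) / (2 * ts)) * (al * 0 ^+ 2 + be * sin ts ^+ 2)^-1
   = (sin ts ^+ 2)^-1 * (1 - sin (2 * ts) / (2 * ts)).
  rewrite expr0n /= mulr0 add0r expr1n mulr1 mul1r.
  by field; rewrite sts !gt_eqF.
by [].
Qed.


Lemma sin_neq0 (ts : R) : 0 < ts -> (forall k : int, ts != k%:~R * pi) -> sin ts != 0.
Proof.
move=> ts0 Hk.
have pi0 := @pi_gt0 R.
have x0 : 0 <= ts / pi by rewrite divr_ge0 // ltW.
have /andP[l1 l2] := truncn_itv x0.
set n := Num.Def.trunc (ts / pi) in l1 l2.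
set r := ts - n%:R * pi.
have r0 : 0 <= r by rewrite /r subr_ge0 -ler_pdivlMr.
have r1 : r < pi.
  have h : ts < (n.+1)%:R * pi by rewrite -ltr_pdivrMr.
  by rewrite /r ltrBlDr; move: h; rewrite -natr1 mulrDl mul1r addrC.
have e : ts = r + pi *+ n by rewrite /r mulr_natl subrK.
rewrite e (alternatingn (@sinDpi R)) mulf_eq0 negb_or signr_eq0 /=.
have [hr|rn] := eqVneq r 0.
  exfalso; move: (Hk n); rewrite e hr add0r -mulr_natl -pmulrn eqxx //.
by rewrite gt_eqF // sin_gt0_pi // lt_def rn r0 r1.
Qed.

End Lim.

Unset Implicit Arguments.
Theorem mainTheorem12 (R : realType) (U : 'M[complex R]_2) (s : complex R)
  (w : nat -> complex R) (theta : nat -> R) (theta_s : R) :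
  unitary2 U ->
  s ^+ 2 = \det U ->
  U 0 0 * U 0 1 * U 1 0 * U 1 1 != 0 ->
  (forall M : nat, (0 < M)%N -> B_in U (w M)) ->
  (forall M : nat, (0 < M)%N ->
     0 < theta M < pi /\ (cos (theta M))%:C%C = xfun U (w M)) ->
  0 < theta_s ->
  (forall k : int, theta_s != k%:~R * pi) ->
  (fun M : nat => M%:R * Num.min (theta M) (pi - theta M)) @ \oo --> theta_s ->
  (fun M : nat => energy U s M (w M) / M%:R) @ \oo -->
    (sin theta_s ^+ 2)^-1 * (1 - sin (2 * theta_s) / (2 * theta_s)).
Proof.
move=> HU Hs Habcd HB Hth ts0 Hk Hlim.
set th' := fun M : nat => if M == 0%N then pi / 2 else theta M.
set t := fun M : nat => Num.min (th' M) (pi - th' M).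
have pi0 := @pi_gt0 R.
have tpos : forall M, 0 < t M.
  move=> M; rewrite /t /th'; case: eqP => [_|/eqP hM].
    rewrite lt_min; apply/andP; split; first by rewrite divr_gt0.
    by rewrite subr_gt0 ltr_pdivrMr // ltr_pMr // ltr1n.
  have hM' : (0 < M)%N by rewrite lt0n.
  have [/andP[h1 h2] _] := Hth M hM'.
  by rewrite lt_min h1 subr_gt0 h2.
have Ht : (fun M => M%:R * t M) @ \oo --> theta_s.
  suff -> : (fun M => M%:R * t M) = (fun M : nat => M%:R * Num.min (theta M) (pi - theta M)) by [].
  apply/funext => M; rewrite /t /th'; case: eqP => [->|//]; by rewrite !mul0r.
have be0 : 0 < be U.
  rewrite lt_def n2_ge0 andbT; apply/eqP => /n2_eq0 h.
  by move: Habcd; rewrite h !(mulr0, mul0r) ?eqxx.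
have G := Glim (al U) be0 ts0 (sin_neq0 ts0 Hk) tpos Ht.
apply: (Leq G) => M hM.
have [m em] : exists m, M = m.+1 by exists M.-1; lia.
have [Hth1 Hx] := Hth M hM.
have Hw : `|w M| = 1 by have [] := HB M hM.
have E := energyE HU Hs Habcd Hw Hth1 Hx m; rewrite -em in E; rewrite E.
have -> : Gf (al U) (be U) (t M) M = Gf (al U) (be U) (theta M) M.
  rewrite /t /th' (negbTE (lt0n_neq0 hM)) /Num.min.
  by case: ifP => _ //; rewrite Gf_refl.
rewrite /Gf /sn /cs /Sr.
have Dn := Dpos Habcd Hth1 M%:R.
have sn := sn0 Hth1.
have Mn : (M%:R : R) != 0 by rewrite pnatr_eq0 -lt0n.
rewrite /Sr /sn in Dn sn.
by field; rewrite Mn sn gt_eqF.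
Qed.
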